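(* Let $$y=\frac{32s(s+1)(5s^2+6s-3)}{(s^2+2s+5)(3s^2+2s+3)^2},\qquad t=\frac{1024s^3(s+1)^2}{(s^2+6s+1)(3s^2+2s+3)^3}.$$ Then $y(t)$ is a solution of $\mathrm{P}_{\mathrm{VI}}$ with parameters $(\theta_1,\theta_2,\theta_3,\theta_4)=(1/2,1/4,1/2,3/4)$.
   Context: $\mathrm{P}_{\mathrm{VI}}$ is the equation $$\frac{d^2y}{dt^2}=\frac12\Big(\frac1y+\frac1{y-1}+\frac1{y-t}\Big)\Big(\frac{dy}{dt}\Big)^2-\Big(\frac1t+\frac1{t-1}+\frac1{y-t}\Big)\frac{dy}{dt}+\frac{y(y-1)(y-t)}{t^2(t-1)^2}\Big(\alpha+\beta\frac{t}{y^2}+\gamma\frac{t-1}{(y-1)^2}+\delta\frac{t(t-1)}{(y-t)^2}\Big),$$ with $\alpha=(\theta_4-1)^2/2$, $\beta=-\theta_1^2/2$, $\gamma=\theta_3^2/2$, $\delta=(1-\theta_2^2)/2$. When $y,t$ are given as rational functions of a parameter on a curve, derivatives with respect to $t$ are computed via the chain rule. *)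

(* Defs.v *)
From Stdlib Require Import Reals.
From Coquelicot Require Import Coquelicot.
Open Scope R_scope.

Definition PVI_rhs (th1 th2 th3 th4 t y y1 : R) : R :=
  let alpha := (th4 - 1)^2 / 2 in
  let beta := - th1^2 / 2 in
  let gamma := th3^2 / 2 in
  let delta := (1 - th2^2) / 2 in
  1/2 * (1/y + 1/(y-1) + 1/(y-t)) * y1^2
  - (1/t + 1/(t-1) + 1/(y-t)) * y1
  + y*(y-1)*(y-t) / (t^2 * (t-1)^2)
    * (alpha + beta * t / y^2 + gamma * (t-1) / (y-1)^2
       + delta * t * (t-1) / (y-t)^2).

Definition PVI_holds (th1 th2 th3 th4 t y y1 y2 : R) : Prop :=
  y2 = PVI_rhs th1 th2 th3 th4 t y y1.

Definition y_of (s : R) : R :=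
  32*s*(s+1)*(5*s^2+6*s-3) / ((s^2+2*s+5)*(3*s^2+2*s+3)^2).

Definition t_of (s : R) : R :=
  1024*s^3*(s+1)^2 / ((s^2+6*s+1)*(3*s^2+2*s+3)^3).

Definition dydt (s : R) : R := Derive y_of s / Derive t_of s.
Definition d2ydt2 (s : R) : R := Derive dydt s / Derive t_of s.

(* Main.v *)
Require Import Defs.
From Stdlib Require Import Reals.
From Coquelicot Require Import Coquelicot.
From Stdlib Require Import Lra.
Open Scope R_scope.

Definition byp s := -45+120*s+681*s^2+530*s^3+37*s^4-140*s^5-129*s^6-30*s^7.
Definition qf s := byp s * (s^2+6*s+1)^2 * (3*s^2+2*s+3) /
   (32 * s^2 * (s+1) * (1-s) * (3*s^2+10*s+3)^2 * (s^2+2*s+5)^2).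
Definition Y1f s := 32*byp s/((s^2+2*s+5)^2*(3*s^2+2*s+3)^3).
Definition T1f s := 1024*s^2*(s+1)*(1-s)*(3*s^2+10*s+3)^2/((s^2+6*s+1)^2*(3*s^2+2*s+3)^4).
Definition gf s := (s^2+6*s+1) * s * (s+1) * (1-s) * (3*s^2+10*s+3).

Lemma D1pos s : s^2+2*s+5 <> 0.
Proof. nra. Qed.
Lemma D2pos s : 3*s^2+2*s+3 <> 0.
Proof. nra. Qed.

Ltac nzprod := simpl pow in *; unfold Rminus in *;
  repeat apply Rmult_integral_contrapositive_currified; auto; lra.

Lemma Dy x : Derive y_of x = Y1f x.
Proof.
  pose proof (D1pos x); pose proof (D2pos x).
  apply is_derive_unique. unfold y_of. auto_derive.
  - nzprod.
  - unfold Y1f, byp. field. auto.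
Qed.

Lemma Dt x : x^2+6*x+1 <> 0 -> Derive t_of x = T1f x.
Proof.
  intro h3. pose proof (D2pos x).
  apply is_derive_unique. unfold t_of. auto_derive.
  - nzprod.
  - unfold T1f. field. auto.
Qed.

Lemma loc_nz (g : R -> R) x : continuous g x -> g x <> 0 -> locally x (fun z => g z <> 0).
Proof.
  intros Hc Hn. apply (Hc (fun z => z <> 0)). exists (mkposreal _ (Rabs_pos_lt _ Hn)).
  intros z Hz E. subst z. unfold ball in Hz; simpl in Hz.
  unfold AbsRing_ball, abs, minus, plus, opp in Hz; simpl in Hz.
  rewrite Rplus_0_l, Rabs_Ropp in Hz. lra.
Qed.

Lemma alg s : s^2+2*s+5 <> 0 -> 3*s^2+2*s+3 <> 0 -> s^2+6*s+1 <> 0 -> s <> 0 -> s+1<>0 -> 1-s<>0 -> 3*s^2+10*s+3 <> 0 ->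
  5*s^2+6*s-3 <> 0 ->
  32 * s * (s + 1) * (5 * s ^ 2 + 6 * s - 3) *
  ((s ^ 2 + 6 * s + 1) * (3 * s ^ 2 + 2 * s + 3)) -
  1024 * s ^ 3 * (s + 1) ^ 2 * (s ^ 2 + 2 * s + 5) <> 0 ->
  32 * s * (s + 1) * (5 * s ^ 2 + 6 * s - 3) -
  (s ^ 2 + 2 * s + 5) * (3 * s ^ 2 + 2 * s + 3) ^ 2 <> 0 ->
  1024 * s ^ 3 * (s + 1) ^ 2 -
  (s ^ 2 + 6 * s + 1) * (3 * s ^ 2 + 2 * s + 3) ^ 3 <> 0 ->
  PVI_holds (1/2) (1/4) (1/2) (3/4) (t_of s) (y_of s) (qf s) (Derive qf s / T1f s).
Proof.
intros h1 h2 h3 h4 h5 h6 h7 h8 h9 h10 h11.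
erewrite is_derive_unique.
2:{ unfold qf, byp. auto_derive. { nzprod. } reflexivity. }
unfold PVI_holds, PVI_rhs, t_of, y_of, qf, T1f, byp.
field. repeat split; auto.
Qed.

Theorem mainTheorem9 : forall s : R,
  s^2 + 2*s + 5 <> 0 ->
  3*s^2 + 2*s + 3 <> 0 ->
  s^2 + 6*s + 1 <> 0 ->
  Derive t_of s <> 0 ->
  t_of s <> 0 -> t_of s <> 1 ->
  y_of s <> 0 -> y_of s <> 1 -> y_of s <> t_of s ->
  PVI_holds (1/2) (1/4) (1/2) (3/4) (t_of s) (y_of s) (dydt s) (d2ydt2 s).
Proof.
  intros s h1 h2 h3 hT ht0 ht1 hy0 hy1 hyt.
  rewrite Dt in hT by exact h3.
  assert (hg : gf s <> 0).
  { intro E. apply hT. unfold gf in E. unfold T1f.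
    repeat (apply Rmult_integral in E; destruct E as [E|E]);
    try (rewrite E; unfold Rdiv; ring).
    all: exfalso; auto. }
  assert (hs : s <> 0 /\ s+1 <> 0 /\ 1-s <> 0 /\ 3*s^2+10*s+3 <> 0).
  { unfold gf in hg. repeat split; intro E; apply hg; rewrite E; ring. }
  destruct hs as (h4 & h5 & h6 & h7).
  assert (Hloc : locally s (fun x => dydt x = qf x)).
  { assert (Hc : continuous gf s).
    { apply (@ex_derive_continuous R_AbsRing R_NormedModule gf s). unfold gf. auto_derive. auto. }
    generalize (loc_nz gf s Hc hg). apply filter_imp. intros x Hx.
    unfold gf in Hx.
    assert (hx : x^2+6*x+1 <> 0 /\ x <> 0 /\ x+1 <> 0 /\ 1-x <> 0 /\ 3*x^2+10*x+3 <> 0).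
    { repeat split; intro E; apply Hx; rewrite E; ring. }
    destruct hx as (g1 & g2 & g3 & g4 & g5).
    pose proof (D1pos x); pose proof (D2pos x).
    unfold dydt. rewrite Dy, Dt by exact g1. unfold Y1f, T1f, qf. field.
    repeat split; auto. }
  assert (E1 : dydt s = qf s) by exact (locally_singleton _ _ Hloc).
  assert (E2 : d2ydt2 s = Derive qf s / T1f s).
  { unfold d2ydt2. rewrite (Derive_ext_loc _ _ _ Hloc), Dt by exact h3. reflexivity. }
  rewrite E1, E2.
  apply alg; auto.
  - intro E. apply hy0. unfold y_of. rewrite E. unfold Rdiv. ring.
  - intro E. apply hyt. apply Rminus_diag_uniq.
    assert (Q : y_of s - t_of s = (32 * s * (s + 1) * (5 * s ^ 2 + 6 * s - 3) *
      ((s ^ 2 + 6 * s + 1) * (3 * s ^ 2 + 2 * s + 3)) -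
      1024 * s ^ 3 * (s + 1) ^ 2 * (s ^ 2 + 2 * s + 5)) /
      ((s ^ 2 + 2 * s + 5) * (3 * s ^ 2 + 2 * s + 3) ^ 3 * (s ^ 2 + 6 * s + 1))).
    { unfold y_of, t_of. field. auto. }
    rewrite Q, E. unfold Rdiv. ring.
  - intro E. apply hy1. apply Rminus_diag_uniq.
    assert (Q : y_of s - 1 = (32 * s * (s + 1) * (5 * s ^ 2 + 6 * s - 3) -
      (s ^ 2 + 2 * s + 5) * (3 * s ^ 2 + 2 * s + 3) ^ 2) /
      ((s ^ 2 + 2 * s + 5) * (3 * s ^ 2 + 2 * s + 3) ^ 2)).
    { unfold y_of. field. auto. }
    rewrite Q, E. unfold Rdiv. ring.
  - intro E. apply ht1. apply Rminus_diag_uniq.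
    assert (Q : t_of s - 1 = (1024 * s ^ 3 * (s + 1) ^ 2 -
      (s ^ 2 + 6 * s + 1) * (3 * s ^ 2 + 2 * s + 3) ^ 3) /
      ((s ^ 2 + 6 * s + 1) * (3 * s ^ 2 + 2 * s + 3) ^ 3)).
    { unfold t_of. field. auto. }
    rewrite Q, E. unfold Rdiv. ring.
Qed.
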